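(* The Banach algebra $M_{\mathbb{N}}(\mathbb{C})$ is symmetrically pseudo-amenable.
   Context: $M_{\mathbb{N}}(\mathbb{C})$ denotes the set of $\mathbb{N}\times\mathbb{N}$ complex matrices $(a_{ij})$ with $\|(a_{ij})\|=\sum_{i,j\in\mathbb{N}}|a_{ij}|<\infty$, a Banach algebra under this norm and the usual matrix multiplication. For a Banach algebra $\mathfrak{U}$, $\mathfrak{U}\widehat{\otimes}\mathfrak{U}$ is the projective tensor product, with $a(b\otimes c)=ab\otimes c$, $(b\otimes c)a=b\otimes ca$, and $\pi(b\otimes c)=bc$ (extended linearly and continuously). The flip is $(b\otimes c)^{\circ}=c\otimes b$; $\mathbf{t}$ is symmetric if $\mathbf{t}^\circ=\mathbf{t}$. An approximate diagonal is a net $\{\mathbf{t}_\lambda\}$ in $\mathfrak{U}\widehat{\otimes}\mathfrak{U}$ (not necessarily bounded) with $a\mathbf{t}_\lambda-\mathbf{t}_\lambda a\to0$ and $\pi(\mathbf{t}_\lambda)a\to a$ for all $a\in\mathfrak{U}$. $\mathfrak{U}$ is symmetrically pseudo-amenable if it has an approximate diagonal consisting of symmetric elements. *)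

(* Defs.v *)
From Stdlib Require Import Reals.
From Coquelicot Require Import Coquelicot.
Open Scope R_scope.

Fixpoint rsum (n : nat) (f : nat -> R) : R :=
  match n with O => 0 | S m => rsum m f + f m end.

Definition CSeries (f : nat -> C) : C :=
  (Series (fun n => Re (f n)), Series (fun n => Im (f n))).

Definition Mat := nat -> nat -> C.

(** ||a|| <= e for the l^1 norm  ||a|| = sum_{i,j} |a_ij|  (all finite
    truncations are bounded by e, equivalently the full sum is <= e). *)
Definition mnorm_le (a : Mat) (e : R) : Prop :=
  forall n, rsum n (fun i => rsum n (fun j => Cmod (a i j))) <= e.

Definition in_MN (a : Mat) : Prop := exists M, mnorm_le a M.

Definition mmul (a b : Mat) : Mat :=
  fun i l => CSeries (fun m => (a i m * b m l)%C).

(** The projective tensor product M_N(C) \hat\otimes M_N(C), identified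
    (isometrically, via Grothendieck's l^1(I) \hat\otimes l^1(J) = l^1(I x J))
    with l^1(N^4):  (b \otimes c)(i,j,k,l) = b_ij * c_kl. *)
Definition Tens := nat -> nat -> nat -> nat -> C.

Definition tnorm_le (t : Tens) (e : R) : Prop :=
  forall n, rsum n (fun i => rsum n (fun j => rsum n (fun k =>
              rsum n (fun l => Cmod (t i j k l))))) <= e.

Definition in_Tens (t : Tens) : Prop := exists M, tnorm_le t M.

(** Module actions a(b \otimes c) = ab \otimes c and (b \otimes c)a = b \otimes ca. *)
Definition lact (a : Mat) (t : Tens) : Tens :=
  fun i j k l => CSeries (fun m => (a i m * t m j k l)%C).
Definition ract (t : Tens) (a : Mat) : Tens :=
  fun i j k l => CSeries (fun m => (t i j k m * a m l)%C).

(** pi(b \otimes c) = bc. *)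
Definition tpi (t : Tens) : Mat :=
  fun i l => CSeries (fun j => t i j j l).

Definition tflip (t : Tens) : Tens := fun i j k l => t k l i j.

Definition symmetric (t : Tens) : Prop := tflip t = t.

Definition directed {D : Type} (le : D -> D -> Prop) : Prop :=
  inhabited D /\ (forall d, le d d) /\
  (forall d1 d2 d3, le d1 d2 -> le d2 d3 -> le d1 d3) /\
  (forall d1 d2, exists d3, le d1 d3 /\ le d2 d3).

Definition MN_symmetrically_pseudo_amenable : Prop :=
  exists (D : Type) (le : D -> D -> Prop) (t : D -> Tens),
    directed le /\
    (forall d, in_Tens (t d)) /\
    (forall d, symmetric (t d)) /\
    (forall a, in_MN a -> forall eps, 0 < eps -> exists d0, forall d, le d0 d ->
       tnorm_le (fun i j k l => (lact a (t d) i j k l - ract (t d) a i j k l)%C) eps) /\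
    (forall a, in_MN a -> forall eps, 0 < eps -> exists d0, forall d, le d0 d ->
       mnorm_le (fun i l => (mmul (tpi (t d)) a i l - a i l)%C) eps).

(* Main.v *)
Require Import Defs.
From Stdlib Require Import Reals Lra Lia Classical FunctionalExtensionality.
From Coquelicot Require Import Coquelicot.
Open Scope R_scope.

Lemma rsum_ext n f g : (forall i, (i < n)%nat -> f i = g i) -> rsum n f = rsum n g.
Proof. induction n; simpl; intros H; auto. rewrite IHn by (intros; apply H; lia). rewrite H by lia. auto. Qed.

Lemma rsum_le n f g : (forall i, (i < n)%nat -> f i <= g i) -> rsum n f <= rsum n g.
Proof. induction n; simpl; intros H; [lra|]. assert (H1 := H n (Nat.lt_succ_diag_r n)).
  assert (rsum n f <= rsum n g) by (apply IHn; intros; apply H; lia). lra. Qed.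

Lemma rsum_nonneg n f : (forall i, (i < n)%nat -> 0 <= f i) -> 0 <= rsum n f.
Proof. intros H. replace 0 with (rsum n (fun _ => 0)). apply rsum_le; auto.
  induction n; simpl; auto. rewrite IHn; [lra|intros; apply H; lia]. Qed.

Lemma rsum_zero n f : (forall i, (i < n)%nat -> f i = 0) -> rsum n f = 0.
Proof. induction n; simpl; intros H; auto. rewrite IHn, H by (intros; try apply H; lia). lra. Qed.

Lemma rsum_minus n f g : rsum n (fun i => f i - g i) = rsum n f - rsum n g.
Proof. induction n; simpl; [lra|]. rewrite IHn; lra. Qed.

Lemma rsum_scal n c f : rsum n (fun i => c * f i) = c * rsum n f.
Proof. induction n; simpl; [lra|]. rewrite IHn; lra. Qed.

Lemma rsum_mono n m f : (m <= n)%nat -> (forall i, 0 <= f i) -> rsum m f <= rsum n f.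
Proof. induction 1; intros; [lra|]. simpl. specialize (IHle H0). specialize (H0 m0). lra. Qed.

Lemma rsum_ltb n N f : rsum N (fun i => if (i <? n)%nat then f i else 0) = rsum (Nat.min N n) f.
Proof. induction N. simpl; auto. cbn [rsum]. destruct (Nat.ltb_spec N n).
  - rewrite Nat.min_l in IHN by lia. rewrite Nat.min_l by lia. cbn [rsum]. rewrite IHN; auto.
  - rewrite Nat.min_r in * by lia. rewrite IHN; lra. Qed.

Lemma rsum_const n c : rsum n (fun _ => c) = INR n * c.
Proof. induction n. simpl; lra. cbn [rsum]. rewrite IHn. rewrite S_INR. lra. Qed.

Lemma rsum_single N p x f : (forall i, i <> p -> f i = 0) -> f p = x -> 0 <= x -> rsum N f <= x.
Proof. intros H Hp Hx. destruct (Nat.lt_ge_cases p N).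
  - replace N with (S p + (N - S p))%nat by lia. 
    induction (N - S p)%nat as [|q IH].
    + rewrite Nat.add_0_r. simpl. rewrite rsum_zero by (intros; apply H; lia). lra.
    + rewrite Nat.add_succ_r. cbn [rsum]. rewrite (H (S p + q)%nat) by lia. lra.
  - rewrite rsum_zero by (intros; apply H; lia). lra. Qed.

Lemma sum_n_rsum f m : sum_n f m = rsum (S m) f.
Proof. rewrite sum_n_Reals. induction m; simpl; [lra|]. rewrite IHm. simpl. lra. Qed.

Lemma Series_fin f K : (forall m, (K <= m)%nat -> f m = 0) -> Series f = rsum K f.
Proof. intros H. apply is_series_unique. unfold is_series.
  change (is_lim_seq (sum_n f) (rsum K f)).
  apply is_lim_seq_ext_loc with (fun _ => rsum K f); [|apply is_lim_seq_const].
  exists K. intros m Hm. rewrite sum_n_rsum.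
  replace (S m) with (K + (S m - K))%nat by lia.
  induction (S m - K)%nat as [|q IH]. rewrite Nat.add_0_r; auto.
  rewrite Nat.add_succ_r. simpl. rewrite IH, H by lia. lra. Qed.

Lemma CSeries_single (f : nat -> C) p : (forall m, m <> p -> f m = 0%C) -> CSeries f = f p.
Proof. intros H. unfold CSeries. rewrite !(Series_fin _ (S p)).
  cbn [rsum]. rewrite !rsum_zero. destruct (f p) as [x y]; simpl; f_equal; lra.
  all: intros; rewrite H by lia; reflexivity. Qed.

Definition SS (a : Mat) N := rsum N (fun i => rsum N (fun l => Cmod (a i l))).
Definition out n i l : R := if andb (i <? n)%nat (l <? n)%nat then 0 else 1.

Lemma SS_mono a m N : (m <= N)%nat -> SS a m <= SS a N.
Proof. intros H. unfold SS. apply Rle_trans with (rsum m (fun i => rsum N (fun l => Cmod (a i l)))).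
  apply rsum_le; intros; apply rsum_mono; auto; intros; apply Cmod_ge_0.
  apply rsum_mono; auto. intros; apply rsum_nonneg; intros; apply Cmod_ge_0. Qed.

Lemma tail_id a n N : rsum N (fun i => rsum N (fun l => Cmod (a i l) * out n i l)) = SS a N - SS a (Nat.min N n).
Proof. unfold SS.
  transitivity (rsum N (fun i => rsum N (fun l => Cmod (a i l)) - rsum N (fun l => if (i <? n)%nat then (if (l <? n)%nat then Cmod (a i l) else 0) else 0))).
  { apply rsum_ext; intros i _. rewrite <- rsum_minus. apply rsum_ext; intros l _.
    unfold out. destruct (i <? n)%nat, (l <? n)%nat; simpl; lra. }
  rewrite rsum_minus. f_equal.
  transitivity (rsum N (fun i => if (i <? n)%nat then rsum N (fun l => if (l <? n)%nat then Cmod (a i l) else 0) else 0)).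
  { apply rsum_ext; intros i _. destruct (i <? n)%nat; auto. apply rsum_zero; auto. }
  rewrite rsum_ltb. apply rsum_ext; intros. apply rsum_ltb. Qed.

Lemma tail a : in_MN a -> forall eps, 0 < eps -> exists n0, forall n, (n0 <= n)%nat -> forall N,
  rsum N (fun i => rsum N (fun l => Cmod (a i l) * out n i l)) <= eps.
Proof. intros [M HM] eps He.
  destruct (completeness (fun x => exists N, x = SS a N)) as [L [HL1 HL2]].
  { exists M. intros x [N ->]. apply HM. }
  { exists (SS a 0). eauto. }
  assert (exists n0, L - eps < SS a n0) as [n0 Hn0].
  { apply NNPP. intros Hc. assert (L <= L - eps); [|lra]. apply HL2. intros x [N ->].
    destruct (Rle_or_lt (SS a N) (L - eps)); auto. exfalso; apply Hc; eauto. }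
  exists n0. intros n Hn N. rewrite tail_id.
  destruct (Nat.le_ge_cases N n).
  - rewrite Nat.min_l by auto. lra.
  - rewrite Nat.min_r by auto. assert (SS a N <= L) by (apply HL1; eauto).
    assert (SS a n0 <= SS a n) by (apply SS_mono; auto). lra. Qed.

Definition tv (n i j k l : nat) : R :=
  if andb (andb (andb (i <? n)%nat (j <? n)%nat) (k =? j)%nat) (l =? i)%nat then / INR n else 0.
Definition tt n : Tens := fun i j k l => RtoC (tv n i j k l).

Lemma C0 (z : C) : (z * RtoC 0)%C = 0%C.
Proof. destruct z; unfold Cmult, RtoC; simpl; f_equal; ring. Qed.
Lemma C0' (z : C) : (RtoC 0 * z)%C = 0%C.
Proof. destruct z; unfold Cmult, RtoC; simpl; f_equal; ring. Qed.

Lemma lact_tt a n i j k l : lact a (tt n) i j k l = (a i l * RtoC (tv n l j k l))%C.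
Proof. unfold lact. apply (CSeries_single (fun m => (a i m * tt n m j k l)%C) l).
  intros m Hm. unfold tt, tv. replace (l =? m)%nat with false by (symmetry; apply Nat.eqb_neq; auto).
  rewrite Bool.andb_false_r. apply C0. Qed.

Lemma ract_tt a n i j k l : ract (tt n) a i j k l = (RtoC (tv n i j k i) * a i l)%C.
Proof. unfold ract. apply (CSeries_single (fun m => (tt n i j k m * a m l)%C) i).
  intros m Hm. unfold tt, tv. replace (m =? i)%nat with false by (symmetry; apply Nat.eqb_neq; auto).
  rewrite Bool.andb_false_r. apply C0'. Qed.

Lemma Cmod_diff (z : C) x y : Cmod (z * RtoC x - RtoC y * z)%C = Cmod z * Rabs (x - y).
Proof. replace (z * RtoC x - RtoC y * z)%C with (z * RtoC (x - y))%C.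
  rewrite Cmod_mult, Cmod_R; auto.
  destruct z; unfold Cmult, Cminus, Cplus, Copp, RtoC; simpl; f_equal; ring. Qed.

Lemma Cmod_diff2 (z : C) x : Cmod (RtoC x * z - z)%C = Cmod z * Rabs (x - 1).
Proof. replace (RtoC x * z - z)%C with (z * RtoC (x - 1))%C.
  rewrite Cmod_mult, Cmod_R; auto.
  destruct z; unfold Cmult, Cminus, Cplus, Copp, RtoC; simpl; f_equal; ring. Qed.

Lemma tv_diff n i j k l : (0 < n)%nat ->
  Rabs (tv n l j k l - tv n i j k i) <= (if andb (j <? n)%nat (k =? j)%nat then / INR n else 0) * out n i l.
Proof. intros Hn. assert (0 < / INR n) by (apply Rinv_0_lt_compat, lt_0_INR; auto).
  unfold tv, out. rewrite !Nat.eqb_refl.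
  destruct (l <? n)%nat, (j <? n)%nat, (k =? j)%nat, (i <? n)%nat; simpl;
  repeat first [rewrite Rminus_diag | rewrite Rabs_R0 | rewrite Rminus_0_r | rewrite Rminus_0_l | rewrite Rabs_Ropp]; 
  try rewrite Rabs_pos_eq; lra. Qed.

Lemma rsum_ind_le N n c : (0 <= c) -> rsum N (fun x => if (x <? n)%nat then c else 0) <= INR n * c.
Proof. intros Hc. rewrite rsum_ltb, rsum_const. apply Rmult_le_compat_r; auto. apply le_INR; lia. Qed.

Lemma diff_bound a n N : (0 < n)%nat ->
  rsum N (fun i => rsum N (fun j => rsum N (fun k => rsum N (fun l =>
    Cmod (lact a (tt n) i j k l - ract (tt n) a i j k l)%C))))
  <= rsum N (fun i => rsum N (fun l => Cmod (a i l) * out n i l)).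
Proof. intros Hn. assert (0 < / INR n) by (apply Rinv_0_lt_compat, lt_0_INR; auto).
  assert (INR n * / INR n = 1) by (field; apply not_0_INR; lia).
  apply rsum_le; intros i _. set (r := rsum N (fun l => Cmod (a i l) * out n i l)).
  assert (0 <= r). { apply rsum_nonneg; intros. apply Rmult_le_pos. apply Cmod_ge_0.
    unfold out; destruct (_ && _)%bool; lra. }
  apply Rle_trans with (rsum N (fun j => if (j <? n)%nat then / INR n * r else 0)).
  2:{ eapply Rle_trans. apply rsum_ind_le. apply Rmult_le_pos; lra. rewrite <- Rmult_assoc. rewrite H0. lra. }
  apply rsum_le; intros j _.
  apply Rle_trans with (rsum N (fun k => (if andb (j <? n)%nat (k =? j)%nat then / INR n else 0) * r)).
  { apply rsum_le; intros k _. unfold r. rewrite <- rsum_scal. apply rsum_le; intros l _.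
    rewrite lact_tt, ract_tt, Cmod_diff.
    eapply Rle_trans; [apply Rmult_le_compat_l; [apply Cmod_ge_0| apply tv_diff; auto] | right; ring]. }
  apply rsum_single with j.
  - intros k Hk. replace (k =? j)%nat with false by (symmetry; apply Nat.eqb_neq; auto).
    rewrite Bool.andb_false_r. lra.
  - rewrite Nat.eqb_refl, Bool.andb_true_r. destruct (j <? n)%nat; lra.
  - destruct (j <? n)%nat; try apply Rmult_le_pos; lra. Qed.

Lemma tpi_tt n i l : (0 < n)%nat -> tpi (tt n) i l = RtoC (if andb (i <? n)%nat (l =? i)%nat then 1 else 0).
Proof. intros Hn. unfold tpi, CSeries, RtoC. f_equal.
  - rewrite (Series_fin _ n). 2:{ intros m Hm. unfold tt, tv; simpl.
      replace (m <? n)%nat with false by (symmetry; apply Nat.ltb_ge; auto).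
      rewrite Bool.andb_false_r. reflexivity. }
    rewrite (rsum_ext _ _ (fun _ => if andb (i <? n)%nat (l =? i)%nat then / INR n else 0)).
    + rewrite rsum_const. destruct (_ && _)%bool. field; apply not_0_INR; lia. lra.
    + intros j Hj. unfold tt, tv; simpl. replace (j <? n)%nat with true by (symmetry; apply Nat.ltb_lt; auto).
      rewrite Nat.eqb_refl, Bool.andb_true_r, Bool.andb_true_r. reflexivity.
  - rewrite (Series_fin _ 0). reflexivity. intros; reflexivity. Qed.

Lemma mmul_tt a n i l : (0 < n)%nat -> mmul (tpi (tt n)) a i l = (RtoC (if (i <? n)%nat then 1 else 0) * a i l)%C.
Proof. intros Hn. unfold mmul.
  rewrite (CSeries_single _ i).
  - rewrite tpi_tt, Nat.eqb_refl, Bool.andb_true_r; auto.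
  - intros m Hm. rewrite tpi_tt by auto. replace (m =? i)%nat with false by (symmetry; apply Nat.eqb_neq; auto).
    rewrite Bool.andb_false_r. apply C0'. Qed.

Lemma in_Tens_tt n : (0 < n)%nat -> in_Tens (tt n).
Proof. intros Hn. assert (0 < / INR n) by (apply Rinv_0_lt_compat, lt_0_INR; auto).
  assert (/ INR n <= 1). { rewrite <- Rinv_1. apply Rinv_le_contravar. lra. apply (le_INR 1); lia. }
  assert (0 <= INR n) by apply pos_INR.
  set (g x := if (x <? n)%nat then 1 else 0).
  assert (Hg : forall x, 0 <= g x) by (intros; unfold g; destruct (_ <? _)%nat; lra).
  assert (L : forall N f c, (forall x, (x < N)%nat -> f x <= g x * c) -> 0 <= c -> rsum N f <= INR n * c).
  { intros N f c Hf Hc. eapply Rle_trans. apply rsum_le. apply Hf. eapply Rle_trans. 2: apply (rsum_ind_le N n c Hc).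
    right. apply rsum_ext; intros. unfold g; destruct (_ <? _)%nat; lra. }
  exists (INR n * (INR n * (INR n * (INR n * 1)))). intros N.
  apply L. 2: repeat apply Rmult_le_pos; lra. intros i _.
  replace (g i * _) with (INR n * (INR n * (INR n * g i))) by ring.
  apply L. 2: repeat apply Rmult_le_pos; auto. intros j _.
  replace (g j * _) with (INR n * (INR n * (g i * g j))) by ring.
  apply L. 2: repeat apply Rmult_le_pos; auto. intros k _.
  replace (g k * _) with (INR n * (g i * g j * g k)) by ring.
  apply L. 2: repeat apply Rmult_le_pos; auto. intros l _.
  unfold tt. rewrite Cmod_R. unfold tv, g.
  destruct (k =? j)%nat eqn:E1; [apply Nat.eqb_eq in E1; subst|];
  destruct (l =? i)%nat eqn:E2; try (apply Nat.eqb_eq in E2; subst);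
  destruct (i <? n)%nat, (j <? n)%nat; simpl;
  rewrite ?Bool.andb_false_r; try rewrite Rabs_R0; try rewrite Rabs_pos_eq by lra; try lra; repeat match goal with |- context [(?x <? n)%nat] => destruct (x <? n)%nat end; lra. Qed.

Lemma sym_tt n : symmetric (tt n).
Proof. unfold symmetric, tflip, tt. apply functional_extensionality; intro i.
  apply functional_extensionality; intro j. apply functional_extensionality; intro k.
  apply functional_extensionality; intro l. f_equal. unfold tv.
  destruct (k =? j)%nat eqn:E1; [apply Nat.eqb_eq in E1; subst|];
  destruct (l =? i)%nat eqn:E2; try (apply Nat.eqb_eq in E2; subst);
  rewrite ?Nat.eqb_refl, ?Bool.andb_true_r, ?Bool.andb_false_r; try rewrite E1; try rewrite E2;
  rewrite ?Bool.andb_false_r; try reflexivity.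
  all: try (destruct (i <? n)%nat, (j <? n)%nat; reflexivity).
  all: try (rewrite (Nat.eqb_sym i l), E2, ?Bool.andb_false_r, ?Bool.andb_false_l; reflexivity).
  all: try (rewrite (Nat.eqb_sym j k), E1, ?Bool.andb_false_r; reflexivity).
Qed.

Theorem theorem4p1 : MN_symmetrically_pseudo_amenable.
Proof.
  exists nat, le, (fun d => tt (S d)). split; [|split; [|split; [|split]]].
  - split; [constructor; exact 0%nat|]. split; [intros; lia|]. split; [intros; lia|].
    intros d1 d2; exists (Nat.max d1 d2); lia.
  - intros d; apply in_Tens_tt; lia.
  - intros d; apply sym_tt.
  - intros a Ha eps He. destruct (tail a Ha eps He) as [n0 Hn0]. exists n0. intros d Hd N.
    eapply Rle_trans. apply diff_bound; lia. apply Hn0. lia.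
  - intros a Ha eps He. destruct (tail a Ha eps He) as [n0 Hn0]. exists n0. intros d Hd N.
    eapply Rle_trans. 2: apply (Hn0 (S d)); lia.
    apply rsum_le; intros i _; apply rsum_le; intros l _.
    rewrite mmul_tt, Cmod_diff2 by lia. apply Rmult_le_compat_l. apply Cmod_ge_0.
    unfold out. destruct (i <? S d)%nat, (l <? S d)%nat; simpl;
    rewrite ?Rminus_diag, ?Rabs_R0; try rewrite Rminus_0_l, Rabs_Ropp, Rabs_R1; lra.
Qed.
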